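(* Let $\mathit{LR}$ be the graded dual Hopf algebra of $\mathcal{Y}Sym$ and $\{M^*_t\}$ the basis dual to $\{M_t\}$. Then $\mathit{LR}$ is the free associative algebra generated by $\{M^*_t: t\text{ progressive}\}$, and $M^*_s\cdot M^*_t=M^*_{s\backslash t}$ for all trees $s,t$.
   Context: $\mathcal{Y}_n$ = rooted planar binary trees with $n$ internal nodes, $\mathcal{Y}_0=\{|\}$; $s\vee t$ = tree whose root has left subtree $s$ and right subtree $t$; $t=t_l\vee t_r$ uniquely for $t\ne|$. Tamari order on $\mathcal{Y}_n$: generated by replacing a subtree $(a\vee b)\vee c$ by the larger $a\vee(b\vee c)$. $|\backslash t=t$, $s\backslash t=s_l\vee(s_r\backslash t)$. A tree $t\ne|$ is progressive if $t_r=|$. $\mathcal{Y}Sym$ is the graded connected Hopf algebra over $\mathbb{Q}$ with basis $F_t$ ($t\in\bigsqcup_n\mathcal{Y}_n$, degree $n$ for $t\in\mathcal{Y}_n$). Leaves of $t\in\mathcal{Y}_p$ are numbered $0..p$; splitting at leaf $i$, $t\to(t_0,t_1)$: $|\to(|,|)$; for $t=t_l\vee t_r$, $t\to(a,b\vee t_r)$ if leaf $i$ is in $t_l$ and $t_l\to(a,b)$ there, $t\to(t_l\vee c,d)$ if in $t_r$ and $t_r\to(c,d)$. $\Delta(F_t)=\sum_iF_{t_0}\otimes F_{t_1}$. For $s\in\mathcal{Y}_q$: $F_t\cdot F_s=\sum F_{(t_0,\dots,t_q)/s}$ over multisets $i_1\le\dots\le i_q$ of leaves of $t$, where the division $t\to(t_0,\dots,t_q)$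 splits $t$ at $i_q$ into $(t',t_q)$ then divides $t'$ at $i_1,..,i_{q-1}$, and $(t_0,..,t_q)/s$ grafts the root of $t_i$ on the $i$-th leaf ($0\le i\le q$) of $s$. $M_t=\sum_{t\le s}\mu_{\mathcal{Y}_n}(t,s)F_s$ (Möbius function of Tamari order). The product of $\mathit{LR}$ is dual to the coproduct of $\mathcal{Y}Sym$ and vice versa. *)

(* Defs.v *)
From HB Require Import structures.
From mathcomp Require Import all_boot all_order all_algebra.
Set Implicit Arguments. Unset Strict Implicit. Unset Printing Implicit Defensive.
Import Order.TTheory GRing.Theory Num.Theory.
Local Open Scope ring_scope.

(* Rooted planar binary trees; Leaf = |, Node s t = s \/ t. *)
Inductive tree := Leaf | Node of tree & tree.

Fixpoint eqtree (s t : tree) : bool :=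
  match s, t with
  | Leaf, Leaf => true
  | Node a b, Node c d => eqtree a c && eqtree b d
  | _, _ => false
  end.

Lemma eqtreeP : Equality.axiom eqtree.
Proof.
elim=> [|a IHa b IHb] [|c d] /=; try by constructor.
case: (IHa c) => [->|h]; last by constructor; case.
case: (IHb d) => [->|h]; last by constructor; case.
by constructor.
Qed.

HB.instance Definition _ := hasDecEq.Build tree eqtreeP.

(* number of internal nodes: t \in Y_n iff nodes t = n *)
Fixpoint nodes (t : tree) : nat :=
  match t with Leaf => 0%N | Node l r => (nodes l + nodes r).+1 end.

(* Enumeration of Y_0, ..., Y_n *)
Fixpoint treesL (n : nat) : seq (seq tree) :=
  match n with
  | 0 => [:: [:: Leaf]]
  | n'.+1 =>
      let L := treesL n' in
      rcons L (flatten [seq [seq Node a b | a <- nth [::] L i, b <- nth [::] L (n' - i)]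
                       | i <- iota 0 n'.+1])
  end.

Definition trees (n : nat) : seq tree := nth [::] (treesL n) n.

Fixpoint rots (t : tree) : seq tree :=
  match t with
  | Leaf => [::]
  | Node l r =>
      (match l with Node a b => [:: Node a (Node b r)] | Leaf => [::] end)
      ++ [seq Node l' r | l' <- rots l] ++ [seq Node l r' | r' <- rots r]
  end.

(* trees reachable from t by at most #|Y_n| rotations (= all reachable ones) *)
Definition reach (t : tree) : seq tree :=
  iter (size (trees (nodes t)))
       (fun l => undup (l ++ flatten (map rots l))) [:: t].

(* Tamari order: reflexive-transitive closure of the rotation relation *)
Definition tle (t s : tree) : bool := s \in reach t.

(* Moebius function of the Tamari order: mu(t,t) = 1,
   mu(t,s) = - sum_{t <= r < s} mu(t,r) for t < s, and 0 otherwise.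
   The fuel k bounds the length of chains, which is < #|Y_n|. *)
Fixpoint mu_f (k : nat) (t s : tree) : rat :=
  if s == t then 1 else
  match k with
  | 0 => 0
  | k'.+1 =>
      if tle t s then
        - \sum_(r <- trees (nodes t) | tle t r && tle r s && (r != s)) mu_f k' t r
      else 0
  end.

Definition mu (t s : tree) : rat := mu_f (size (trees (nodes t))) t s.

(* Elements of YSym as finite formal combinations  sum c * F_s  *)
Definition ysym := seq (rat * tree).

Definition Mbasis (t : tree) : ysym :=
  [seq (mu t s, s) | s <- trees (nodes t) & tle t s].

(* Linear functionals on YSym, given by their values on the F-basis:
   f s = <f, F_s>.  The graded dual LR consists of the finitely supported ones. *)
Definition functional := tree -> rat.

Definition pairing (f : functional) (x : ysym) : rat := \sum_(p <- x) p.1 * f p.2.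

Definition finsupp (f : functional) : Prop :=
  exists n : nat, forall s, (n < nodes s)%N -> f s = 0.

(* Splitting t at leaf i (leaves numbered 0..nodes t) *)
Fixpoint tsplit (t : tree) (i : nat) : tree * tree :=
  match t with
  | Leaf => (Leaf, Leaf)
  | Node l r =>
      if (i < (nodes l).+1)%N then
        let ab := tsplit l i in (ab.1, Node ab.2 r)
      else
        let cd := tsplit r (i - (nodes l).+1) in (Node l cd.1, cd.2)
  end.

(* Product of LR, dual to the coproduct Delta(F_t) = sum_i F_{t_0} (x) F_{t_1}:
   <f g, F_s> = <f (x) g, Delta F_s>. *)
Definition LRmul (f g : functional) : functional :=
  fun s => \sum_(i < (nodes s).+1) f (tsplit s i).1 * g (tsplit s i).2.

(* unit of LR: the counit of YSym, i.e. F*_| *)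
Definition LRone : functional := fun s => if s == Leaf then 1 else 0.

Fixpoint under (s t : tree) : tree :=
  match s with Leaf => t | Node l r => Node l (under r t) end.

Definition progressive (t : tree) : bool :=
  match t with Node _ Leaf => true | _ => false end.

Definition Mdual (Ms : tree -> functional) : Prop :=
  forall t u, pairing (Ms t) (Mbasis u) = (t == u)%:R.

Definition monomial (Ms : tree -> functional) (w : seq tree) : functional :=
  foldr (fun t acc => LRmul (Ms t) acc) LRone w.

(* Main.v *)
Require Import Defs.
From mathcomp Require Import all_boot all_order all_algebra.
From mathcomp Require Import zify.
Set Implicit Arguments. Unset Strict Implicit.
Import GRing.Theory.

Lemma size_treesL n : size (treesL n) = n.+1.
Proof. by elim: n => //= n IH; rewrite size_rcons IH. Qed.

Lemma nth_treesL n i : i <= n -> nth [::] (treesL n) i = trees i.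
Proof.
elim: n i => [|n IH] i; first by rewrite leqn0 => /eqP ->.
rewrite leq_eqVlt => /orP [/eqP -> //| lt].
by rewrite /= nth_rcons size_treesL lt IH.
Qed.

Lemma treesS n : trees n.+1 =
  flatten [seq [seq Node a b | a <- trees i, b <- trees (n - i)] | i <- iota 0 n.+1].
Proof.
rewrite {1}/trees.
change (treesL n.+1) with (rcons (treesL n) (flatten [seq [seq Node a b | a <- nth [::] (treesL n) i, b <- nth [::] (treesL n) (n - i)] | i <- iota 0 n.+1])).
rewrite nth_rcons size_treesL ltnn eqxx.
congr flatten; apply/eq_in_map => i; rewrite mem_iota add0n ltnS => lein.
rewrite !nth_treesL //; exact: leq_subr.
Qed.

Lemma trees_sound n t : t \in trees n -> nodes t = n.
Proof.
elim/ltn_ind: n t => -[|n] IH t; first by rewrite /trees /= inE => /eqP ->.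
rewrite treesS => /flatten_mapP [i]; rewrite mem_iota add0n ltnS => lein.
case/allpairsP => [[a b] /= [ha hb ->]] /=.
rewrite (IH i) ?(IH (n - i)) //; lia.
Qed.

Lemma trees_complete t : t \in trees (nodes t).
Proof.
elim: t => [|a IHa b IHb] /=; first by rewrite /trees /= inE.
rewrite treesS; apply/flatten_mapP; exists (nodes a).
  by rewrite mem_iota; lia.
have -> : nodes a + nodes b - nodes a = nodes b by lia.
exact: allpairs_f.
Qed.

Lemma uniq_flatten_key (F : nat -> seq tree) (key : tree -> nat) m k :
  (forall i, i < m + k -> uniq (F i)) -> (forall i x, x \in F i -> key x = i) ->
  uniq (flatten [seq F i | i <- iota m k]).
Proof.
elim: k m => [|k IH] m uF kF //=.
rewrite cat_uniq uF ?IH ?andbT /=; try (by move=> i ?; apply: uF; lia); try lia; last by [].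
apply/hasPn => x /flatten_mapP [i].
rewrite mem_iota => /andP [lt _] /kF kx; apply/negP => /kF; lia.
Qed.

Lemma trees_uniq n : uniq (trees n).
Proof.
elim/ltn_ind: n => -[|n] IH; first by [].
rewrite treesS; apply: (@uniq_flatten_key _ (fun t => if t is Node a _ then nodes a else 0)).
  move=> i lein.
    apply: allpairs_uniq; rewrite ?IH //; try lia.
    by move=> [a b] [c d] _ _ /= [-> ->].
move=> i x /allpairsP [[a b] /= [ha hb ->]]; exact: trees_sound ha.
Qed.

Lemma rotsP l r x' : x' \in rots (Node l r) ->
  [\/ exists a b, l = Node a b /\ x' = Node a (Node b r),
      exists2 l', l' \in rots l & x' = Node l' r
    | exists2 r', r' \in rots r & x' = Node l r'].
Proof.
rewrite /= !mem_cat => /orP [|/orP [] /mapP [y hy ->]].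
- by case: l => // a b; rewrite inE => /eqP ->; apply: Or31; exists a, b.
- by apply: Or32; exists y.
- by apply: Or33; exists y.
Qed.

Lemma rots_nodes x x' : x' \in rots x -> nodes x' = nodes x.
Proof.
elim: x x' => // l IHl r IHr x' /rotsP [[a [b [-> ->]]] | [l' /IHl h ->] | [r' /IHr h ->]] /=; lia.
Qed.

Fixpoint phi (t : tree) : nat :=
  match t with Leaf => 0 | Node l r => phi l + phi r + nodes r end.

Lemma rots_phi x x' : x' \in rots x -> phi x < phi x'.
Proof.
elim: x x' => // l IHl r IHr x' /rotsP [[a [b [-> ->]]] | [l' /IHl h ->] | [r' hr ->]] /=; try lia.
have := IHr _ hr; have := rots_nodes hr; lia.
Qed.

Lemma phi_le t : phi t <= nodes t * nodes t.
Proof. elim: t => //= l IHl r IHr; nia. Qed.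

Definition step (l : seq tree) := undup (l ++ flatten (map rots l)).

Lemma mem_step l x : (x \in step l) = (x \in l) || has (fun y => x \in rots y) l.
Proof.
rewrite /step mem_undup mem_cat; congr orb.
apply/flatten_mapP/hasP => [[y hy hx]|[y hy hx]]; by exists y.
Qed.

Lemma iter_ind (P : tree -> Prop) t k : P t ->
  (forall x x', P x -> x' \in rots x -> P x') ->
  forall s, s \in iter k step [:: t] -> P s.
Proof.
move=> Pt cl; elim: k => [|k IH] s /=; first by rewrite inE => /eqP ->.
rewrite mem_step => /orP [/IH //| /hasP [y /IH hy hs]]; exact: cl hs.
Qed.

Lemma iterS t k : iter k.+1 step [:: t] = step (iter k step [:: t]).
Proof. by []. Qed.

Lemma iter_sub t k : {subset iter k step [:: t] <= iter k.+1 step [:: t]}.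
Proof. by move=> x hx; rewrite iterS mem_step hx. Qed.

Lemma iter_uniq t k : uniq (iter k step [:: t]).
Proof. by case: k => //= k; exact: undup_uniq. Qed.

Definition closed (l : seq tree) := forall x x', x \in l -> x' \in rots x -> x' \in l.

Lemma reach_closed t : closed (reach t).
Proof.
set N := size (trees (nodes t)).
have inT k x : x \in iter k step [:: t] -> x \in trees (nodes t).
  move=> hx; have <- : nodes x = nodes t; last exact: trees_complete.
  by apply: (iter_ind (P := fun x => nodes x = nodes t)) hx => // y y' <- /rots_nodes.
have key k : closed (iter k step [:: t]) \/ k < size (iter k step [:: t]).
  elim: k => [|k IH]; first by right.
  have cl_eq : closed (iter k step [:: t]) -> iter k.+1 step [:: t] =i iter k step [:: t].
    move=> cl x; apply/idP/idP; last exact: iter_sub.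
    by rewrite iterS mem_step => /orP [//| /hasP [y hy hx]]; exact: cl hx.
  case: IH => [cl | lt].
    left => x x'; rewrite !cl_eq; exact: cl.
  case: (leqP (size (iter k.+1 step [:: t])) (size (iter k step [:: t]))) => hs; last by right; lia.
  have [_ eqs] := uniq_min_size (iter_uniq t k) (@iter_sub t k) hs.
  left => x x'; rewrite -!eqs => hx hx'.
  by rewrite eqs iterS mem_step; apply/orP; right; apply/hasP; exists x.
case: (key N) => [h|lt]; first exact: h. exfalso.
have := uniq_leq_size (iter_uniq t N) (inT N); by rewrite leqNgt lt.
Qed.

Lemma tle_refl t : tle t t.
Proof.
rewrite /tle /reach; elim: (size _) => [|k IH]; first by rewrite inE.
exact: iter_sub.
Qed.

Lemma tle_ind (P : tree -> Prop) t s : P t ->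
  (forall x x', P x -> x' \in rots x -> P x') -> tle t s -> P s.
Proof. move=> Pt cl; exact: iter_ind. Qed.

Lemma tle_rot_r t x x' : tle t x -> x' \in rots x -> tle t x'.
Proof. move=> h1 h2; exact: reach_closed h1 h2. Qed.

Lemma tle_trans t s r : tle t s -> tle s r -> tle t r.
Proof. move=> h1 h2; apply: (@tle_ind (fun y => tle t y) s r h1) h2 => x x' hx; exact: tle_rot_r. Qed.

Lemma tle_rot x x' : x' \in rots x -> tle x x'.
Proof. apply: tle_rot_r; exact: tle_refl. Qed.

Lemma tle_nodes t s : tle t s -> nodes s = nodes t.
Proof. by apply: (@tle_ind (fun y => nodes y = nodes t)) => // x x' <- /rots_nodes. Qed.

Lemma tle_phi t s : tle t s -> s = t \/ phi t < phi s.
Proof.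
apply: (@tle_ind (fun y => y = t \/ phi t < phi y)); first by left.
move=> x x' h /rots_phi; case: h => [-> |]; right; lia.
Qed.

Lemma tle_anti t s : tle t s -> tle s t -> s = t.
Proof.
move=> /tle_phi [//|h1] /tle_phi [->//|h2]; lia.
Qed.

Lemma tle_lift (G : tree -> tree) x y :
  (forall a a', a' \in rots a -> tle (G a) (G a')) -> tle x y -> tle (G x) (G y).
Proof.
move=> hG; apply: (@tle_ind (fun y => tle (G x) (G y))); first exact: tle_refl.
move=> a a' h1 h2; apply: tle_trans h1 _; exact: hG.
Qed.

Lemma tle_leaf s : tle s Leaf = (s == Leaf).
Proof.
apply/idP/eqP => [h|->]; last exact: tle_refl.
by case: s h => // l r /tle_nodes.
Qed.

Lemma nodes_under s t : nodes (under s t) = nodes s + nodes t.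
Proof. elim: s => //= l _ r IH; rewrite IH; lia. Qed.

Lemma split_nodes u i : i <= nodes u -> nodes (tsplit u i).1 = i.
Proof.
elim: u i => [|l IHl r IHr] i /=; first by rewrite leqn0 => /eqP ->.
move=> hi; case: ifP => h /=; first by rewrite IHl.
rewrite IHr; lia.
Qed.

Lemma split0 t : tsplit t 0 = (Leaf, t).
Proof. by elim: t => //= l IHl r _; rewrite IHl. Qed.

Lemma split_under s t : tsplit (under s t) (nodes s) = (s, t).
Proof.
elim: s => [|l _ r IH] /=.
  exact: split0.
rewrite ifN; last by rewrite -leqNgt; lia.
by rewrite subSS addKn IH.
Qed.

Lemma rots_Nl l l' r : l' \in rots l -> Node l' r \in rots (Node l r).
Proof. by move=> h; rewrite /= !mem_cat (map_f (fun x => Node x r) h) orbT. Qed.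

Lemma rots_Nr l r r' : r' \in rots r -> Node l r' \in rots (Node l r).
Proof. by move=> h; rewrite /= !mem_cat (map_f (fun x => Node l x) h) !orbT. Qed.

Lemma rots_root a b c : Node a (Node b c) \in rots (Node (Node a b) c).
Proof. by rewrite /= inE eqxx. Qed.

Lemma tle_Nl l l' r : tle l l' -> tle (Node l r) (Node l' r).
Proof. apply: (@tle_lift (fun x => Node x r)) => a a' h; exact/tle_rot/rots_Nl. Qed.

Lemma tle_Nr l r r' : tle r r' -> tle (Node l r) (Node l r').
Proof. apply: (@tle_lift (fun x => Node l x)) => a a' h; exact/tle_rot/rots_Nr. Qed.

Lemma rots_under_l x x' t : x' \in rots x -> under x' t \in rots (under x t).
Proof.
elim: x x' => // l IHl r IHr x' /rotsP [[a [b [-> ->]]] | [l' h ->] | [r' h ->]] /=.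
- exact: rots_root.
- exact: rots_Nl.
- exact/rots_Nr/IHr.
Qed.

Lemma rots_under_r s y y' : y' \in rots y -> under s y' \in rots (under s y).
Proof. by elim: s => //= l _ r IH h; apply/rots_Nr/IH. Qed.

Lemma tle_under_l x x' t : tle x x' -> tle (under x t) (under x' t).
Proof. apply: (@tle_lift (fun x => under x t)) => a a' h; exact/tle_rot/rots_under_l. Qed.

Lemma tle_under_r s y y' : tle y y' -> tle (under s y) (under s y').
Proof. apply: (@tle_lift (fun x => under s x)) => a a' h; exact/tle_rot/rots_under_r. Qed.

Lemma K3 a b r : tle (Node (under a b) r) (under a (Node b r)).
Proof.
elim: a => [|x _ y IH] /=; first exact: tle_refl.
apply: tle_trans (tle_rot (rots_root _ _ _)) _.
exact: tle_Nr.
Qed.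

Lemma K4 u i : tle u (under (tsplit u i).1 (tsplit u i).2).
Proof.
elim: u i => [|l IHl r IHr] i /=; first exact: tle_refl.
case: ifP => _ /=.
  apply: tle_trans (tle_Nl r (IHl i)) _; exact: K3.
exact/tle_Nr/IHr.
Qed.

Lemma K5 x x' i : x' \in rots x ->
  tle (tsplit x i).1 (tsplit x' i).1 && tle (tsplit x i).2 (tsplit x' i).2.
Proof.
elim: x x' i => // l IHl r IHr x' i /rotsP [[a [b [-> ->]]] | [l' h ->] | [r' h ->]] /=.
- case: (ltnP i (nodes a).+1) => h1.
    rewrite ifT; last by lia.
    by rewrite /= tle_refl /=; apply/tle_rot/rots_root.
  case: (ltnP i (nodes a + nodes b).+2) => h2.
    rewrite ifT; last by lia.
    by rewrite /= !tle_refl.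
  rewrite ifN /=; last by lia.
  have -> : i - (nodes a).+1 - (nodes b).+1 = i - (nodes a + nodes b).+2 by lia.
  by rewrite tle_refl andbT; apply/tle_rot/rots_root.
- rewrite (rots_nodes h); case: ifP => _ /=;
    first [ by rewrite tle_refl andbT; apply/(tle_Nl _)/tle_rot
          | by case/andP: (IHl _ i h) => -> /(tle_Nl r) -> ].
- case: ifP => _ /=;
    first [ by rewrite !tle_refl ?andbT; apply/tle_Nr/tle_rot
          | by case/andP: (IHr _ (i - (nodes l).+1) h) => /(tle_Nr l) -> -> ].
Qed.

Lemma K5' x y i : tle x y ->
  tle (tsplit x i).1 (tsplit y i).1 && tle (tsplit x i).2 (tsplit y i).2.
Proof.
apply: (@tle_ind (fun y => tle (tsplit x i).1 (tsplit y i).1 && tle (tsplit x i).2 (tsplit y i).2)).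
  by rewrite !tle_refl.
move=> a a' /andP [h1 h2] /(@K5 _ _ i) /andP [h3 h4].
by rewrite (tle_trans h1 h3) (tle_trans h2 h4).
Qed.

Lemma Kmain u s t :
  tle u (under s t) = tle (tsplit u (nodes s)).1 s && tle (tsplit u (nodes s)).2 t.
Proof.
apply/idP/andP => [/(K5' (nodes s)) | [h1 h2]].
  by rewrite split_under => /andP.
apply: tle_trans (K4 u (nodes s)) _.
exact: tle_trans (tle_under_l _ h1) (tle_under_r _ h2).
Qed.

Lemma count_lt (T : eqType) (a b : pred T) (s : seq T) x :
  (forall y, a y -> b y) -> x \in s -> b x -> ~~ a x -> count a s < count b s.
Proof.
move=> ab; elim: s => // y s IH; rewrite inE => /orP [/eqP <- | hx] bx ax /=.
  rewrite bx (negbTE ax) add0n add1n ltnS; exact: sub_count.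
have := IH hx bx ax; case: (boolP (a y)) => ay; first by rewrite (ab _ ay); lia.
case: (b y); lia.
Qed.

Definition gcount u r := count (fun x => tle u x && tle x r && (x != r)) (trees (nodes u)).

Lemma mu_refl k t : mu_f k t t = 1%R.
Proof. by case: k => [|k] /=; rewrite eqxx. Qed.

Lemma gcount_lt u x r : tle u x -> tle x r -> x != r -> gcount u x < gcount u r.
Proof.
move=> h1 h2 h3; apply: (count_lt (x := x)).
- move=> y /andP [/andP [hy1 hy2] hy3]; rewrite hy1 (tle_trans hy2 h2) /=.
  apply/eqP => e; subst y; move/eqP: hy3; apply; exact: tle_anti.
- rewrite -(tle_nodes h1); exact: trees_complete.
- by rewrite h1 h2 h3.
- by rewrite eqxx andbF.
Qed.

Lemma mu_stable u k r : gcount u r <= k -> mu_f k u r = mu_f k.+1 u r.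
Proof.
elim: k r => [|k IH] r hr.
  rewrite /=; case e: (r == u) => //; case h: (tle u r) => //.
  have : 0 < gcount u r.
    rewrite /gcount -has_count; apply/hasP; exists u; first exact: trees_complete.
    by rewrite tle_refl h eq_sym e.
  lia.
rewrite [LHS]/= [RHS]/=; case e: (r == u) => //; case h: (tle u r) => //.
congr (- _)%R; rewrite big_seq_cond [RHS]big_seq_cond; apply: eq_bigr => x.
case/andP => _ /andP [/andP [h1 h2] h3]; apply: IH.
have := gcount_lt h1 h2 h3; lia.
Qed.

Lemma gcount_bound u r : tle u r -> gcount u r < size (trees (nodes u)).
Proof.
move=> h; rewrite -count_predT; apply: (count_lt (x := r)) => //.
- rewrite -(tle_nodes h); exact: trees_complete.
- by rewrite eqxx andbF.
Qed.

Local Open Scope ring_scope.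

Lemma mu_rec u t : tle u t -> t != u ->
  mu u t = - \sum_(r <- trees (nodes u) | tle u r && tle r t && (r != t)) mu u r.
Proof.
move=> h ne; rewrite /mu.
have hN : (0 < size (trees (nodes u)))%N.
  rewrite lt0n size_eq0; apply/eqP => e; have := trees_complete u; by rewrite e.
rewrite -{1}(prednK hN) /= (negbTE ne) h; congr (- _).
rewrite big_seq_cond [RHS]big_seq_cond; apply: eq_bigr => x.
case/andP => _ /andP [/andP [h1 h2] h3].
rewrite mu_stable ?prednK //.
have := gcount_bound h1; lia.
Qed.

Definition Ms0 (t : tree) : functional := fun s => (tle s t)%:R.

Lemma pairing_Mbasis f x : pairing f (Mbasis x) =
  f x + \sum_(s <- trees (nodes x) | tle x s && (s != x)) mu x s * f s.
Proof.
rewrite /pairing /Mbasis big_map -big_filter_cond.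
rewrite (bigD1_seq x) /=; last by rewrite filter_uniq // trees_uniq.
  by rewrite /mu mu_refl mul1r big_filter_cond.
by rewrite mem_filter tle_refl trees_complete.
Qed.

Lemma exist_dual : Mdual Ms0.
Proof.
move=> t u; rewrite /pairing /Mbasis big_map big_filter /=.
rewrite (eq_bigr (fun s => if tle s t then mu u s else 0)); last first.
  by move=> s _; rewrite /Ms0; case: (tle s t); rewrite ?mulr1 ?mulr0.
rewrite -big_mkcondr.
case: (boolP (tle u t)) => hut; last first.
  rewrite big1; last by move=> s /andP [h1 h2]; case/negP: hut; exact: tle_trans h2.
  case: eqP => // e; subst; by rewrite tle_refl in hut.
rewrite -big_filter (bigD1_seq t) /=; first last.
- by rewrite filter_uniq // trees_uniq.
- by rewrite mem_filter hut tle_refl -(tle_nodes hut) trees_complete.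
rewrite big_filter_cond.
case: eqP => [e | /eqP ne].
  subst; rewrite /mu mu_refl big1 ?addr0 //.
  move=> s /andP [/andP [h1 h2] h3]; by rewrite (tle_anti h1 h2) eqxx in h3.
by rewrite (mu_rec hut ne) addNr.
Qed.

Lemma uniq_dual Ms : Mdual Ms -> forall t x, Ms t x = Ms0 t x.
Proof.
move=> hM t.
suff h : forall k x, (nodes x * nodes x - phi x < k)%N -> Ms t x = Ms0 t x.
  by move=> x; apply: (h (nodes x * nodes x - phi x).+1).
elim=> [//|k IH] x hx.
have := hM t x; have := exist_dual t x; rewrite !pairing_Mbasis => e0 e.
have eqs : \sum_(s <- trees (nodes x) | tle x s && (s != x)) mu x s * Ms t s =
           \sum_(s <- trees (nodes x) | tle x s && (s != x)) mu x s * Ms0 t s.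
  apply: eq_bigr => s /andP [h1 h2]; rewrite IH //.
  have := tle_nodes h1; have := phi_le s; have := phi_le x.
  case: (tle_phi h1) => [e'|]; first by rewrite e' eqxx in h2.
  lia.
by move: e; rewrite eqs -e0 => /addIr.
Qed.

Lemma prod_Ms0 s t u : LRmul (Ms0 s) (Ms0 t) u = Ms0 (under s t) u.
Proof.
rewrite /LRmul /Ms0.
case: (leqP (nodes s) (nodes u)) => h; last first.
  rewrite big1; last first.
    move=> i _; case e: (tle _ s); last by rewrite mul0r.
    have := tle_nodes e; rewrite split_nodes; last by rewrite -ltnS ltn_ord.
    have := ltn_ord i; lia.
  case e: (tle u _) => //; have := tle_nodes e; rewrite nodes_under; lia.
have h' : (nodes s < (nodes u).+1)%N by [].
rewrite (bigD1 (Ordinal h')) //= big1 ?addr0 ?Kmain -?natrM ?mulnb //.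
move=> i ne; case e: (tle _ s); last by rewrite mul0r.
have := tle_nodes e; rewrite split_nodes; last by rewrite -ltnS ltn_ord.
move=> e'; case/eqP: ne; apply: val_inj => /=; by rewrite e'.
Qed.
Local Open Scope ring_scope.

Definition Tw (w : seq tree) := foldr under Leaf w.

Fixpoint word (t : tree) : seq tree :=
  match t with Leaf => [::] | Node l r => Node l Leaf :: word r end.

Lemma Tw_word t : Tw (word t) = t.
Proof. by elim: t => //= l _ r IH; rewrite -/(Tw (word r)) IH. Qed.

Lemma word_prog t : all progressive (word t).
Proof. by elim: t => //= l _ r ->. Qed.

Lemma Tw_inj w w' : all progressive w -> all progressive w' -> Tw w = Tw w' -> w = w'.
Proof.
elim: w w' => [|x w IH] [|x' w'] //=.
- by case: x' => // l [].
- by case: x => // l [].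
case: x => // l []//; case: x' => // l' []// /andP [_ h] /andP [_ h'] [-> e].
by rewrite (IH w' h h' e).
Qed.

Lemma monomial_eq Ms : Mdual Ms -> forall w s, monomial Ms w s = Ms0 (Tw w) s.
Proof.
move=> hM; elim=> [|t w IH] s.
  by rewrite /monomial /= /LRone /Ms0 tle_leaf; case: (s == Leaf).
change (LRmul (Ms t) (monomial Ms w) s = Ms0 (under t (Tw w)) s).
rewrite -(prod_Ms0 t (Tw w) s) /LRmul; apply: eq_bigr => i _.
by rewrite IH (uniq_dual hM).
Qed.

Lemma indep (ws : seq (seq tree)) (c : seq tree -> rat) :
  uniq ws -> all (all progressive) ws ->
  (forall s, \sum_(w <- ws) c w * Ms0 (Tw w) s = 0) ->
  forall w, w \in ws -> c w = 0.
Proof.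
move=> uws pws H.
suff h : forall k w, w \in ws -> (nodes (Tw w) * nodes (Tw w) - phi (Tw w) < k)%N -> c w = 0.
  by move=> w hw; apply: (h _ w hw (ltnSn _)).
elim=> [//|k IH] w hw hk.
have := H (Tw w); rewrite (bigD1_seq w) //= /Ms0 tle_refl mulr1 big_seq_cond big1 ?addr0 //.
move=> w' /andP [hw' ne]; case e: (tle _ _); last by rewrite mulr0.
rewrite (IH w') ?mul0r //.
have := tle_nodes e; have := phi_le (Tw w'); have := phi_le (Tw w).
case: (tle_phi e) => [e'|]; last by lia.
case/eqP: ne; apply: Tw_inj e' => //; [exact: (allP pws) | exact: (allP pws)].
Qed.

Section Span.
Variable n : nat.
Definition Lst := [seq x <- undup (flatten [seq trees k | k <- iota 0 n.+1]) | (nodes x <= n)%N].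

Lemma Lst_uniq : uniq Lst.
Proof. by rewrite filter_uniq // undup_uniq. Qed.

Lemma mem_Lst x : (x \in Lst) = (nodes x <= n)%N.
Proof.
rewrite mem_filter andb_idr // => h; rewrite mem_undup; apply/flatten_mapP.
by exists (nodes x); [rewrite mem_iota; lia | exact: trees_complete].
Qed.

Lemma span_theta theta : forall g : functional,
  (forall s, (n < nodes s)%N || (theta <= phi s)%N -> g s = 0) ->
  exists d : tree -> rat, forall s, g s = \sum_(x <- Lst) d x * Ms0 x s.
Proof.
elim: theta => [|th IH] g hg.
  exists (fun _ => 0) => s; rewrite hg ?orbT // big1 // => x _; by rewrite mul0r.
pose g' := fun s => g s - \sum_(x <- Lst | phi x == th) g x * Ms0 x s.
have [d' hd'] : exists d : tree -> rat, forall s, g' s = \sum_(x <- Lst) d x * Ms0 x s.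
  apply: IH => s hs; rewrite /g'.
  case: (ltnP n (nodes s)) => hn.
    rewrite hg ?hn // big_seq_cond big1 ?subr0 // => x /andP [hx _].
    rewrite /Ms0; case e: (tle s x); last by rewrite mulr0.
    have := tle_nodes e; rewrite mem_Lst in hx; lia.
  rewrite ltnNge hn /= in hs.
  case: (ltnP th (phi s)) => hp.
    rewrite hg ?hp ?orbT // big1 ?subr0 // => x /eqP hx.
    rewrite /Ms0; case e: (tle s x); last by rewrite mulr0.
    exfalso; case: (tle_phi e) => [xe|]; [rewrite xe in hx|]; lia.
  have ep : phi s = th by lia.
  rewrite -big_filter (bigD1_seq s) /=; first last.
  - by rewrite filter_uniq // Lst_uniq.
  - by rewrite mem_filter ep eqxx mem_Lst.
  rewrite /Ms0 tle_refl mulr1 big_filter_cond big1 ?addr0 ?subrr // => x /andP [/eqP hx ne].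
  case e: (tle s x); last by rewrite mulr0.
  case: (tle_phi e) => [e'|]; last by move=> ?; exfalso; lia.
  by rewrite e' eqxx in ne.
exists (fun x => d' x + (if phi x == th then g x else 0)) => s.
have -> : g s = g' s + \sum_(x <- Lst | phi x == th) g x * Ms0 x s by rewrite /g' subrK.
rewrite hd' (big_mkcond (fun x => phi x == th)) -big_split /=; apply: eq_bigr => x _.
by case: (phi x == th); rewrite ?mulrDl ?mul0r ?addr0.
Qed.
End Span.

Local Open Scope ring_scope.

Theorem theorem8p1 :
  (exists Ms : tree -> functional, Mdual Ms) /\
  forall Ms : tree -> functional, Mdual Ms ->
    [/\ (* the words in progressive generators are linearly independent in LR *)
        (forall (ws : seq (seq tree)) (c : seq tree -> rat),
            uniq ws -> all (all progressive) ws ->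
            (forall s, \sum_(w <- ws) c w * monomial Ms w s = 0) ->
            forall w, w \in ws -> c w = 0),
        (* ... and span LR (the finitely supported functionals) *)
        (forall f : functional, finsupp f ->
            exists (ws : seq (seq tree)) (c : seq tree -> rat),
              all (all progressive) ws /\
              forall s, f s = \sum_(w <- ws) c w * monomial Ms w s)
      & (* M*_s M*_t = M*_{s\t} *)
        forall s t u, LRmul (Ms s) (Ms t) u = Ms (under s t) u].
Proof.
split; first by exists Ms0; exact: exist_dual.
move=> Ms hM; split.
- move=> ws c uws pws H; apply: indep => // s.
  rewrite -[RHS](H s); apply: eq_bigr => w _; by rewrite monomial_eq.
- move=> f [n hn].
  have [|d hd] := @span_theta n (n * n).+1 f.
    move=> s /orP [/hn //|hs]; apply: hn.
    have := phi_le s; case: (leqP (nodes s) n) => h //; nia.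
  exists (map word (Lst n)), (fun w => d (Tw w)); split.
    by rewrite all_map; apply/allP => x _; exact: word_prog.
  move=> s; rewrite hd big_map; apply: eq_bigr => x _.
  by rewrite monomial_eq // Tw_word.
- move=> s t u; rewrite /LRmul !(uniq_dual hM).
  rewrite -prod_Ms0; apply: eq_bigr => i _; by rewrite !(uniq_dual hM).
Qed.
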